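(* Let $(X,\tau_X)$ be a locally compact space and $(Y,\mathcal{V})$ a Hausdorff uniform space, and equip $\mathcal{C}(X,Y)$, the set of continuous point-compact multifunctions from $X$ to $Y$, with the topology of uniform convergence $\tau_{uc}$. Let $\mathcal{F}\subset\mathcal{C}(X,Y)$ be pointwise relatively compact and equicontinuous. Then the following are equivalent: (C1) $\mathcal{F}$ is relatively $\tau_{uc}$-compact; (C2) $\mathcal{F}$ satisfies the finite extension property; (C3) $\mathcal{F}$ satisfies the compact extension property.
   Context: A multifunction $f:X\to Y$ assigns to each $x$ a nonempty $f(x)\subset Y$; it is point-compact if each $f(x)$ is compact. For $V\subset Y\times Y$, $V[a]=\{w:(a,w)\in V\}$, $V[A]=\bigcup_{a\in A}V[a]$, $f(A)=\bigcup_{a\in A}f(a)$; entourages are taken symmetric. $f$ is upper semi-continuous if for each $x$ and open $W\supset f(x)$ there is an open $U_x\ni x$ with $f(U_x)\subset W$; lower semi-continuous if for each $x$ and open $W$ with $f(x)\cap W\neq\emptyset$ there is an open $U_x\ni x$ with $f(u)\cap W\neq\emptyset$ for all $u\in U_x$; continuous if both. For $V\in\mathcal{V}$ and $D\subset X$ let $$V^{\dagger}_D=\{(f,g):\ \forall x\in D\ \forall y\in f(x)\ \forall z\in g(x):\ (\{y\}\times g(x))\cap V\neq\emptyset,\ (f(x)\times\{z\})\cap V\neq\emptyset\},$$ and $V^\dagger=V^\dagger_X$. The sets $V^\dagger$ form a base of the uniformity of uniform convergence, inducing $\tau_{uc}$. The uniformity of pointwise convergence $\mathcal{W}_{pc}$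 on $\mathcal{F}$ has subbase the sets $V^\dagger_{\{x\}}\cap(\mathcal{F}\times\mathcal{F})$ ($x\in X$, $V\in\mathcal{V}$); the uniformity of uniform convergence on compacta $\mathcal{W}_{ucc}$ on $\mathcal{F}$ has base the sets $V^\dagger_D\cap(\mathcal{F}\times\mathcal{F})$ ($D\subset X$ compact, $V\in\mathcal{V}$). $\mathcal{F}$ is pointwise relatively compact if $\bigcup\{f(x):f\in\mathcal{F}\}$ is relatively compact in $Y$ for each $x$. $\mathcal{F}$ is equicontinuous if for every $x\in X$ and $V\in\mathcal{V}$ there is an open $U_x\ni x$ such that for all $f\in\mathcal{F}$: $f(U_x)\subset V[f(x)]$, and $f(u)\cap V[y]\neq\emptyset$ for all $u\in U_x$, $y\in f(x)$. $\mathcal{F}$ has the finite (resp. compact) extension property if for every $V\in\mathcal{V}$ there is $W\in\mathcal{W}_{pc}$ (resp. $W\in\mathcal{W}_{ucc}$) with $W\subset V^\dagger\cap(\mathcal{F}\times\mathcal{F})$. Relatively $\tau_{uc}$-compact means the $\tau_{uc}$-closure of $\mathcal{F}$ in $\mathcal{C}(X,Y)$ is compact. *)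

(* Defs.v *)
From HB Require Import structures.
From mathcomp Require Import all_boot all_order all_algebra.
From mathcomp Require Import finmap.
From Stdlib Require List.
From mathcomp Require Import all_classical all_reals all_analysis.
Set Implicit Arguments. Unset Strict Implicit. Unset Printing Implicit Defensive.
Local Open Scope classical_set_scope.

(* A multifunction X -> Y is represented by its set-valued function;
   nonemptiness of values is part of membership in C(X,Y). *)

Definition mf_image {X Y : Type} (f : X -> set Y) (A : set X) : set Y :=
  \bigcup_(a in A) f a.

Definition mf_usc {X Y : topologicalType} (f : X -> set Y) : Prop :=
  forall (x : X) (W : set Y), open W -> f x `<=` W ->
    exists U : set X, [/\ open U, U x & mf_image f U `<=` W].

Definition mf_lsc {X Y : topologicalType} (f : X -> set Y) : Prop :=
  forall (x : X) (W : set Y), open W -> f x `&` W !=set0 ->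
    exists U : set X, [/\ open U, U x & forall u, U u -> f u `&` W !=set0].

Definition CXY (X Y : topologicalType) : set (X -> set Y) :=
  [set f | [/\ (forall x, f x !=set0), (forall x, compact (f x)),
              mf_usc f & mf_lsc f]].

Arguments CXY : clear implicits.

Definition sym_ent {Y : uniformType} (V : set (Y * Y)) : Prop :=
  entourage V /\ (forall a b, V (a, b) -> V (b, a)).

Definition ent_sec {Y : Type} (V : set (Y * Y)) (a : Y) : set Y :=
  [set w | V (a, w)].

Definition dagger {X Y : Type} (V : set (Y * Y)) (D : set X) :
  set ((X -> set Y) * (X -> set Y)) :=
  [set fg | forall x, D x ->
      (forall y, fg.1 x y -> exists z, fg.2 x z /\ V (y, z)) /\
      (forall z, fg.2 x z -> exists y, fg.1 x y /\ V (y, z))].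

Definition sqF {X Y : Type} (F : set (X -> set Y)) :
  set ((X -> set Y) * (X -> set Y)) := F `*` F.

(* uniformity of pointwise convergence on F: generated by the subbase
   V^dagger_{x} /\ FxF (x in X, V symmetric entourage) *)
Definition W_pc {X : Type} {Y : uniformType} (F : set (X -> set Y))
  : set (set ((X -> set Y) * (X -> set Y))) :=
  [set W | W `<=` sqF F /\
    exists s : seq (X * set (Y * Y)),
      (forall p, List.In p s -> sym_ent p.2) /\
      (sqF F `&` [set fg | forall p, List.In p s -> dagger p.2 [set p.1] fg])
        `<=` W].

(* uniformity of uniform convergence on compacta on F: base
   V^dagger_D /\ FxF (D compact, V symmetric entourage) *)
Definition W_ucc {X : topologicalType} {Y : uniformType}
  (F : set (X -> set Y)) : set (set ((X -> set Y) * (X -> set Y))) :=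
  [set W | W `<=` sqF F /\
    exists (D : set X) (V : set (Y * Y)),
      [/\ compact D, sym_ent V & sqF F `&` dagger V D `<=` W]].

Definition finite_extension_property {X : Type} {Y : uniformType}
  (F : set (X -> set Y)) : Prop :=
  forall V, sym_ent V -> exists W, W_pc F W /\ W `<=` dagger V setT `&` sqF F.

Definition compact_extension_property {X : topologicalType} {Y : uniformType}
  (F : set (X -> set Y)) : Prop :=
  forall V, sym_ent V -> exists W, W_ucc F W /\ W `<=` dagger V setT `&` sqF F.

Definition pointwise_rel_compact {X : Type} {Y : topologicalType}
  (F : set (X -> set Y)) : Prop :=
  forall x, compact (closure (\bigcup_(f in F) f x)).

Definition mf_equicontinuous {X : topologicalType} {Y : uniformType}
  (F : set (X -> set Y)) : Prop :=
  forall (x : X) (V : set (Y * Y)), sym_ent V ->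
    exists U : set X, [/\ open U, U x &
      forall f, F f ->
        mf_image f U `<=` mf_image (ent_sec V) (f x) /\
        (forall u y, U u -> f x y -> f u `&` ent_sec V y !=set0)].

(* the topology tau_uc on C(X,Y), induced by the uniformity with base the
   V^dagger (V symmetric entourage), written out explicitly *)
Definition uc_open {X : topologicalType} {Y : uniformType}
  (O : set (X -> set Y)) : Prop :=
  O `<=` CXY X Y /\
  forall g, O g -> exists V, sym_ent V /\
    forall h, CXY X Y h -> dagger V setT (g, h) -> O h.

Definition uc_closure {X : topologicalType} {Y : uniformType}
  (F : set (X -> set Y)) : set (X -> set Y) :=
  [set g | CXY X Y g /\
     forall O, uc_open O -> O g -> O `&` F !=set0].

Definition uc_compact {X : topologicalType} {Y : uniformType}
  (K : set (X -> set Y)) : Prop :=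
  K `<=` CXY X Y /\
  forall (I : choiceType) (O : I -> set (X -> set Y)),
    (forall i, uc_open (O i)) -> K `<=` \bigcup_(i in setT) O i ->
    exists D : {fset I}, K `<=` \bigcup_(i in [set` D]) O i.

Definition rel_uc_compact {X : topologicalType} {Y : uniformType}
  (F : set (X -> set Y)) : Prop := uc_compact (uc_closure F).

(* Main.v *)
Require Import Defs.
From HB Require Import structures.
From mathcomp Require Import all_boot all_order all_algebra.
From mathcomp Require Import finmap.
From Stdlib Require List.
From mathcomp Require Import all_classical all_reals all_analysis.
Set Implicit Arguments. Unset Strict Implicit. Unset Printing Implicit Defensive.
Local Open Scope classical_set_scope.


Lemma sym_ent_refl {Y : uniformType} (V : set (Y * Y)) a : sym_ent V -> V (a, a).
Proof. by case=> eV _; exact: entourage_refl. Qed.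

Lemma sym_entT {Y : uniformType} : sym_ent (@setT (Y * Y)).
Proof. by split => //; exact: entourageT. Qed.

Lemma sym_entI {Y : uniformType} (V W : set (Y * Y)) :
  sym_ent V -> sym_ent W -> sym_ent (V `&` W).
Proof.
move=> [eV sV] [eW sW]; split; first exact: filterI.
by move=> a b [] /sV ? /sW ?.
Qed.

Definition ehalf {Y : uniformType} (V : set (Y * Y)) : set (Y * Y) :=
  split_ent V `&` [set p | split_ent V (p.2, p.1)].

Lemma ehalf_sym {Y : uniformType} (V : set (Y * Y)) : entourage V -> sym_ent (ehalf V).
Proof.
move=> eV; split.
  apply: filterI; first exact: entourage_split_ent.
  exact: (entourage_inv (entourage_split_ent eV)).
by move=> a b [h1 h2]; split.
Qed.

Lemma ehalf_comp {Y : uniformType} (V : set (Y * Y)) a b c : entourage V ->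
  ehalf V (a, b) -> ehalf V (b, c) -> V (a, c).
Proof. by move=> eV [h1 _] [h2 _]; exact: (entourage_split b eV h1 h2). Qed.

Lemma ehalf_sub {Y : uniformType} (V : set (Y * Y)) : entourage V -> ehalf V `<=` V.
Proof.
move=> eV [a b] h; apply: (ehalf_comp eV h).
exact: (sym_ent_refl _ (ehalf_sym eV)).
Qed.

Definition third {Y : uniformType} (V : set (Y * Y)) := ehalf (ehalf V).

Lemma third_sym {Y : uniformType} (V : set (Y * Y)) : entourage V -> sym_ent (third V).
Proof. by move=> eV; apply: ehalf_sym; case: (ehalf_sym eV). Qed.

Lemma third_comp {Y : uniformType} (V : set (Y * Y)) a b c d : entourage V ->
  third V (a, b) -> third V (b, c) -> third V (c, d) -> V (a, d).
Proof.
move=> eV h1 h2 h3; have eH : entourage (ehalf V) by case: (ehalf_sym eV).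
apply: (ehalf_comp eV (ehalf_comp eH h1 h2)).
exact: (ehalf_sub eH h3).
Qed.

Lemma sym_of_ent {Y : uniformType} (E : set (Y * Y)) : entourage E ->
  exists V, sym_ent V /\ V `<=` E.
Proof. by move=> eE; exists (ehalf E); split; [exact: ehalf_sym|exact: ehalf_sub]. Qed.

Lemma dagger_sym {X Y : Type} (V : set (Y * Y)) (D : set X) f g :
  (forall a b, V (a, b) -> V (b, a)) -> dagger V D (f, g) -> dagger V D (g, f).
Proof.
move=> sV h x Dx; have [h1 h2] := h x Dx; split => /=.
  by move=> y /h2 [z [? /sV ?]]; exists z.
by move=> y /h1 [z [? /sV ?]]; exists z.
Qed.

Lemma dagger_comp {X Y : Type} (V1 V2 V3 : set (Y * Y)) (D : set X) f g h :
  (forall a b c, V1 (a, b) -> V2 (b, c) -> V3 (a, c)) ->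
  dagger V1 D (f, g) -> dagger V2 D (g, h) -> dagger V3 D (f, h).
Proof.
move=> cV h1 h2 x Dx; have [a1 a2] := h1 x Dx; have [b1 b2] := h2 x Dx.
split => /=.
  move=> y /a1 [z [gz Vyz]]; have [w [hw Vzw]] := b1 z gz.
  by exists w; split => //; exact: cV Vyz Vzw.
move=> w /b2 [z [gz Vzw]]; have [y [fy Vyz]] := a2 z gz.
by exists y; split => //; exact: cV Vyz Vzw.
Qed.

Lemma dagger_mono {X Y : Type} (V V' : set (Y * Y)) (D D' : set X) fg :
  V `<=` V' -> D' `<=` D -> dagger V D fg -> dagger V' D' fg.
Proof.
move=> sV sD h x /sD Dx; have [h1 h2] := h x Dx; split.
  by move=> y /h1 [z [? /sV ?]]; exists z.
by move=> y /h2 [z [? /sV ?]]; exists z.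
Qed.

Lemma dagger_refl {X Y : Type} (V : set (Y * Y)) (D : set X) f :
  (forall a, V (a, a)) -> dagger V D (f, f).
Proof. by move=> rV x _; split => y fy; exists y. Qed.

Definition ucball {X : topologicalType} {Y : uniformType} (V : set (Y * Y))
  (g : X -> set Y) : set (X -> set Y) :=
  [set k | CXY X Y k /\ exists W, sym_ent W /\
     forall k', CXY X Y k' -> dagger W setT (k, k') -> dagger V setT (g, k')].

Lemma ucball_open {X : topologicalType} {Y : uniformType} (V : set (Y * Y))
  (g : X -> set Y) : uc_open (ucball V g).
Proof.
split; first by move=> k [].
move=> k [Ck [W [sW HW]]]; have eW : entourage W by case: sW.
exists (ehalf W); split; first exact: ehalf_sym.
move=> h Ch dkh; split => //; exists (ehalf W); split; first exact: ehalf_sym.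
move=> k' Ck' dhk'; apply: HW => //.
by apply: (dagger_comp _ dkh dhk') => a b c; exact: ehalf_comp.
Qed.

Lemma ucball_center {X : topologicalType} {Y : uniformType} (V : set (Y * Y))
  (g : X -> set Y) : sym_ent V -> CXY X Y g -> ucball V g g.
Proof. by move=> sV Cg; split => //; exists V; split. Qed.

Lemma ucball_dagger {X : topologicalType} {Y : uniformType} (V : set (Y * Y))
  (g : X -> set Y) k : ucball V g k -> dagger V setT (g, k).
Proof.
move=> [Ck [W [sW HW]]]; apply: HW => //.
by apply: dagger_refl => a; exact: sym_ent_refl.
Qed.

Lemma uc_closure_approx {X : topologicalType} {Y : uniformType}
  (F : set (X -> set Y)) g V : uc_closure F g -> sym_ent V ->
  exists f, F f /\ dagger V setT (g, f).
Proof.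
move=> [Cg Hg] sV; have [f [Bf Ff]] := Hg _ (ucball_open V g) (ucball_center sV Cg).
by exists f; split => //; exact: ucball_dagger.
Qed.

Lemma sub_uc_closure {X : topologicalType} {Y : uniformType}
  (F : set (X -> set Y)) : F `<=` CXY X Y -> F `<=` uc_closure F.
Proof. by move=> FC f Ff; split; [exact: FC| move=> O _ Of; exists f]. Qed.
Definition cone_filter (T : eqType) : set_system (seq T) :=
  [set S | exists A : seq T, forall B, {subset A <= B} -> S B].

Lemma cone_filter_filter (T : eqType) : Filter (@cone_filter T).
Proof.
split.
- by exists [::].
- move=> P Q [A HA] [B HB]; exists (A ++ B) => C sC; split.
    by apply: HA => x xA; apply: sC; rewrite mem_cat xA.
  by apply: HB => x xB; apply: sC; rewrite mem_cat xB orbT.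
- by move=> P Q PQ [A HA]; exists A => B /HA /PQ.
Qed.

Lemma compact_fincover {X : topologicalType} (D : set X) (U : X -> set X) :
  compact D -> (forall x, D x -> nbhs x (U x)) ->
  exists B : seq X, forall x, D x -> exists i, [/\ i \in B, D i & U i x].
Proof.
move=> /compact_near_coveringP cD nU.
have := cD (seq X) (@cone_filter X) (fun B x => exists i, [/\ i \in B, D i & U i x])
  (@cone_filter_filter X).
case.
  move=> x Dx; exists (U x, [set B | x \in B]); first split => //=.
    exact: nU.
    by exists [:: x] => B; apply; rewrite mem_head.
  by case=> x' B /= [Ux' xB]; exists x.
by move=> A HA; exists A; apply: HA.
Qed.


Lemma seq_data {X : topologicalType} {Y : uniformType} (s : seq (X * set (Y * Y))) :
  (forall p, List.In p s -> sym_ent p.2) ->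
  exists (D : set X) (V : set (Y * Y)), [/\ compact D, sym_ent V &
    forall fg, dagger V D fg -> forall p, List.In p s -> dagger p.2 [set p.1] fg].
Proof.
elim: s => [_|p s IH Hs].
  by exists set0, setT; split => //; [exact: compact0|exact: sym_entT].
have [|D [V [cD sV HV]]] := IH; first by move=> q sq; apply: Hs; right.
exists ([set p.1] `|` D), (p.2 `&` V); split.
- by apply: compactU => //; exact: compact_set1.
- by apply: sym_entI => //; apply: Hs; left.
move=> fg dfg q [<-|sq].
  by apply: (dagger_mono _ _ dfg) => [? []//|? ->]; left.
apply: HV => //; apply: (dagger_mono _ _ dfg) => [? []//|? ?]; by right.
Qed.

Lemma fep_cep {X : topologicalType} {Y : uniformType} (F : set (X -> set Y)) :
  finite_extension_property F -> compact_extension_property F.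
Proof.
move=> fep V sV; have [W [[WF [s [Hs Hsub]]] WV]] := fep V sV.
exists W; split => //; split => //.
have [D [V' [cD sV' HV']]] := seq_data Hs.
exists D, V'; split => // fg [Ffg dfg]; apply: Hsub; split => //.
exact: HV'.
Qed.


Lemma In_of_mem (T : eqType) (x : T) (s : seq T) : x \in s -> List.In x s.
Proof.
elim: s => [//|a s IH]; rewrite in_cons => /orP [/eqP ->|/IH ?]; [left|right] => //.
Qed.

Lemma cep_fep {X : topologicalType} {Y : uniformType} (F : set (X -> set Y)) :
  mf_equicontinuous F ->
  compact_extension_property F -> finite_extension_property F.
Proof.
move=> equi cep V sV; have [W [[WF [D [V0 [cD sV0 Hsub]]]] WV]] := cep V sV.
exists W; split => //; split => //.
have eV0 : entourage V0 by case: sV0.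
set V1 := third V0; have sV1 : sym_ent V1 by exact: third_sym.
have [Uf HU] := choice (fun x => equi x V1 sV1).
have [Dfin cov] := compact_fincover (U := Uf) cD
  (fun x _ => let: And3 o1 o2 _ := HU x in open_nbhs_nbhs (conj o1 o2)).
exists [seq (x, V1) | x <- Dfin]; split.
  by move=> p /List.in_map_iff [x [<- _]].
move=> [f g] [[Ff Fg] Hp]; apply: Hsub; split => //.
move=> x Dx; have [i [Di _ Uix]] := cov x Dx.
have [_ _ Hi] := HU i; have [If1 If2] := Hi f Ff; have [Ig1 Ig2] := Hi g Fg.
have /Hp /= Hdi : List.In (i, V1) [seq (x, V1) | x <- Dfin].
  by apply: In_of_mem; apply: map_f.
have [Hd1 Hd2] := Hdi i erefl; have [_ sym1] := sV1.
split => /=.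
  move=> y fxy; have [a fia V1ay] : mf_image (ent_sec V1) (f i) y.
    by apply: If1; exists x.
  have [b [gib V1ab]] := Hd1 a fia.
  have [z [gxz V1bz]] := Ig2 x b Uix gib.
  by exists z; split => //; apply: (third_comp eV0 (sym1 _ _ V1ay) V1ab V1bz).
move=> z gxz; have [b gib V1bz] : mf_image (ent_sec V1) (g i) z.
  by apply: Ig1; exists x.
have [a [fia V1ab]] := Hd2 b gib.
have [y [fxy V1ay]] := If2 x a Uix fia.
by exists y; split => //; apply: (third_comp eV0 (sym1 _ _ V1ay) V1ab V1bz).
Qed.




Lemma ruc_fep {X : topologicalType} {Y : uniformType} (F : set (X -> set Y)) :
  F `<=` CXY X Y -> rel_uc_compact F -> finite_extension_property F.
Proof.
move=> FC [KC cK] V sV; have eV : entourage V by case: sV.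
set Va := third V; have sVa : sym_ent Va by exact: third_sym.
have eVa : entourage Va by case: sVa.
set Vb := third Va; have sVb : sym_ent Vb by exact: third_sym.
have cov : uc_closure F `<=` \bigcup_(h in setT) ucball Vb h.
  by move=> h Kh; exists h => //; exact: ucball_center (KC h Kh).
have [Dfin HD] := cK (X -> set Y) (ucball Vb) (fun h => ucball_open Vb h) cov.
have Hex : forall ij : (X -> set Y) * (X -> set Y),
  exists o : option X, (o = None -> dagger Va setT ij) /\
     (forall x, o = Some x -> ~ dagger Va [set x] ij).
  move=> ij; have [[x Hx]|N] := EM (exists x, ~ dagger Va [set x] ij).
    by exists (Some x); split => // x' [<-].
  exists None; split => // _ x _; apply: contrapT => Nx; apply: N.
  exists x => Hx; apply: Nx; exact: (Hx x erefl).
have [bad Hbad] := choice Hex.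
set s := [seq (x, Vb) | x <- pmap bad [seq (i, j) | i <- Dfin, j <- Dfin]].
exists (sqF F `&` [set fg | forall p, List.In p s -> dagger p.2 [set p.1] fg]).
split.
  split; first by move=> ? [].
  exists s; split => //; by move=> p /List.in_map_iff [x [<- _]].
move=> [f g] [[Ff Fg] Hs]; split => //.
have [i Di fi] := HD f (sub_uc_closure FC Ff).
have [j Dj gj] := HD g (sub_uc_closure FC Fg).
have dif := ucball_dagger fi; have djg := ucball_dagger gj.
have [Hn Hsm] := Hbad (i, j).
have sub3 : forall a b c d, Vb (a, b) -> Vb (b, c) -> Vb (c, d) -> Va (a, d).
  by move=> a b c d; exact: third_comp.
have [_ symb] := sVb.
case E : (bad (i, j)) => [x|].
  exfalso; apply: (Hsm x E).
  have Ins : List.In (x, Vb) s.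
    apply: In_of_mem; apply: map_f; rewrite mem_pmap -E.
    by apply: map_f; apply: allpairs_f.
  have dfg := Hs _ Ins.
  have d1 : dagger Vb [set x] (i, f) by apply: (dagger_mono _ _ dif).
  have d2 : dagger Vb [set x] (g, j) by apply: (dagger_sym symb); apply: (dagger_mono _ _ djg).
  have d12 : dagger (fun p => exists2 b, Vb (p.1, b) & Vb (b, p.2)) [set x] (i, g).
    by apply: (dagger_comp _ d1 dfg) => a b c h1 h2; exists b.
  apply: (dagger_comp _ d12 d2) => a c d [b h1 h2] h3.
  exact: sub3 h1 h2 h3.
have dij := Hn E.
have d1 : dagger Vb setT (f, i) by apply: (dagger_sym symb).
have d12 : dagger (fun p => exists2 b, Vb (p.1, b) & Va (b, p.2)) setT (f, j).
  by apply: (dagger_comp _ d1 dij) => a b c h1 h2; exists b.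
apply: (dagger_comp _ d12 djg) => a c d [b h1 h2] h3.
have [_ syma] := sVa.
apply: (third_comp eV _ h2).
  by apply: (third_comp eVa h1); exact: sym_ent_refl.
by apply: (third_comp eVa h3); exact: sym_ent_refl.
Qed.


Definition smallF {Y : uniformType} : set_system (set (Y * Y)) :=
  [set S | exists2 E, entourage E & forall E', entourage E' -> E' `<=` E -> S E'].

Lemma smallF_filter {Y : uniformType} : Filter (@smallF Y).
Proof.
split.
- by exists setT => //; exact: entourageT.
- move=> P Q [E eE HE] [E' eE' HE']; exists (E `&` E'); first exact: filterI.
  by move=> E'' eE'' s; split; [apply: HE|apply: HE'] => // ? /s [].
- by move=> P Q PQ [E eE HE]; exists E => // E' eE' /(HE _ eE') /PQ.
Qed.

Lemma compact_ent_nbhd {Y : uniformType} (C W : set Y) :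
  compact C -> open W -> C `<=` W ->
  exists E, entourage E /\ forall y w, C y -> E (y, w) -> W w.
Proof.
move=> /compact_near_coveringP cC oW CW.
have Hc : forall y, C y -> \forall y' \near y & E \near (@smallF Y),
    (fun E y => forall w, E (y, w) -> W w) E y'.
  move=> y Cy; have : nbhs y W by apply: open_nbhs_nbhs; split => //; exact: CW.
  move=> /nbhsP [E0 eE0 sE0].
  exists (xsection (split_ent E0) y, [set E | E `<=` split_ent E0]).
    split => /=; first exact: nbhs_entourage.
    by exists (split_ent E0) => //; exact: entourage_split_ent.
  case=> y' E /= [/xsectionP Ay' sE] w /sE Ew; apply: sE0; apply/xsectionP.
  exact: (entourage_split y' eE0 Ay' Ew).
have := cC _ _ _ smallF_filter Hc; case=> E eE HE; exists E; split => //.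
by move=> y w Cy; apply: (HE E eE (@subset_refl _ E)).
Qed.

Definition glim {X : Type} {Y : uniformType} (U : set_system (X -> set Y)) : X -> set Y :=
  fun x => [set y | forall E, entourage E -> U [set h | exists z, h x z /\ E (y, z)]].

Definition Kx {X : Type} {Y : topologicalType} (F : set (X -> set Y)) (x : X) :=
  closure (\bigcup_(f in F) f x).

Lemma glim_K {X : Type} {Y : uniformType} (F : set (X -> set Y))
  (U : set_system (X -> set Y)) x : ProperFilter U -> U F ->
  glim U x `<=` Kx F x.
Proof.
move=> PU UF y gy; apply: closed_closure => B /nbhsP [E eE sEB].
have [h [[z [hz Ez]] Fh]] := filter_ex (filterI (gy E eE) UF).
exists z; split; first by apply: subset_closure; exists h.
by apply: sEB; apply/xsectionP.
Qed.

Lemma glim_closed {X : Type} {Y : uniformType} (U : set_system (X -> set Y)) x :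
  Filter U -> closed (glim U x).
Proof.
move=> FU y cy E eE.
have [y' [gy' /xsectionP E'yy']] := cy _ (nbhs_entourage y (entourage_split_ent eE)).
apply: filterS (gy' _ (entourage_split_ent eE)) => h [z [hz E'z]].
by exists z; split => //; exact: (entourage_split y' eE E'yy' E'z).
Qed.

Lemma glim_compact {X : Type} {Y : uniformType} (F : set (X -> set Y))
  (U : set_system (X -> set Y)) x : ProperFilter U -> U F ->
  pointwise_rel_compact F -> compact (glim U x).
Proof.
move=> PU UF prc; apply: (@subclosed_compact _ _ (Kx F x)).
- exact: glim_closed.
- exact: prc.
- exact: glim_K.
Qed.

Lemma glim_P1 {X : Type} {Y : uniformType} (F : set (X -> set Y))
  (U : set_system (X -> set Y)) x V : ProperFilter U -> U F ->
  pointwise_rel_compact F -> sym_ent V ->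
  U [set h | forall y, glim U x y -> exists z, h x z /\ V (y, z)].
Proof.
move=> PU UF prc [eV _].
have /compact_near_coveringP cC := glim_compact (x:=x) PU UF prc.
have sV' := ehalf_sym eV; have [eV' symV'] := sV'.
have Hc : forall y, glim U x y -> \forall y' \near y & h \near U,
    (fun h y => exists z, h x z /\ V (y, z)) h y'.
  move=> y gy; exists (xsection (ehalf V) y, [set h | exists z, h x z /\ ehalf V (y, z)]).
    by split => /=; [exact: nbhs_entourage | exact: gy].
  case=> y' h /= [/xsectionP Ay' [z [hz Vz]]]; exists z; split => //.
  exact: (ehalf_comp eV (symV' _ _ Ay') Vz).
exact: (cC _ _ _ _ Hc).
Qed.

Lemma glim_P2 {X : Type} {Y : uniformType} (F : set (X -> set Y))
  (U : set_system (X -> set Y)) x V : UltraFilter U -> U F ->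
  pointwise_rel_compact F -> sym_ent V ->
  U [set h | F h -> forall z, h x z -> exists y, glim U x y /\ V (y, z)].
Proof.
move=> UU UF prc [eV _].
have /compact_near_coveringP cC := prc x.
have sV' := ehalf_sym eV; have [eV' symV'] := sV'.
have Hc : forall w, Kx F x w -> \forall w' \near w & h \near U,
    (fun h w => h x w -> exists y, glim U x y /\ V (y, w)) h w'.
  move=> w Kw; have [[y [gy Vyw]]|N] := EM (exists y, glim U x y /\ ehalf V (y, w)).
    exists (xsection (ehalf V) w, setT).
      by split => /=; [exact: nbhs_entourage | exact: filterT].
    case=> w' h /= [/xsectionP Aw' _] _; exists y; split => //.
    exact: (ehalf_comp eV Vyw Aw').
  have [E [eE nU]] : exists E, entourage E /\
      ~ U [set h | exists z, h x z /\ E (w, z)].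
    apply: contrapT => H; apply: N; exists w; split; last exact: sym_ent_refl.
    move=> E eE; apply: contrapT => nU; apply: H; by exists E; split.
  case: (@in_ultra_setVsetC _ U [set h | exists z, h x z /\ E (w, z)] UU) => [/nU//|UC].
  exists (xsection E w, ~` [set h | exists z, h x z /\ E (w, z)]).
    by split => /=; [exact: nbhs_entourage | exact: UC].
  case=> w' h /= [/xsectionP Aw' nS] hw'; exfalso; apply: nS.
  by exists w'; split.
have Hk : U [set h | Kx F x `<=` (fun w => h x w -> exists y, glim U x y /\ V (y, w))].
  exact: (cC _ _ _ _ Hc).
apply: filterS Hk => h H Fh z hz; apply: H => //.
by apply: subset_closure; exists h.
Qed.


Lemma glim_ptw {X : Type} {Y : uniformType} (F : set (X -> set Y))
  (U : set_system (X -> set Y)) x V : UltraFilter U -> U F ->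
  pointwise_rel_compact F -> sym_ent V ->
  U [set h | F h /\ dagger V [set x] (glim U, h)].
Proof.
move=> UU UF prc sV.
have P1 := glim_P1 x (@ultra_proper _ _ UU) UF prc sV; have P2 := glim_P2 x UU UF prc sV.
apply: filterS (filterI UF (filterI P1 P2)) => h [Fh [p1 p2]]; split => //.
by move=> x0 ->; split => //=; exact: p2.
Qed.

Lemma filter_forall_In {T A : Type} (U : set_system T) (Q : A -> set T) (s : seq A) :
  Filter U -> (forall p, List.In p s -> U (Q p)) ->
  U [set h | forall p, List.In p s -> Q p h].
Proof.
move=> FU; elim: s => [_|p s IH H]; first by apply: filterS filterT => h _ p [].
apply: filterS (filterI (H p (or_introl erefl)) (IH (fun q sq => H q (or_intror sq)))).
by move=> h [Qh Hs] q [<-|sq] //; exact: Hs.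
Qed.

Lemma glim_unif {X : Type} {Y : uniformType} (F : set (X -> set Y))
  (U : set_system (X -> set Y)) V : UltraFilter U -> U F ->
  pointwise_rel_compact F -> finite_extension_property F -> sym_ent V ->
  U [set h | F h /\ dagger V setT (glim U, h)].
Proof.
move=> UU UF prc fep sV; have eV : entourage V by case: sV.
have sV1 := ehalf_sym eV; have [eV1 symV1] := sV1.
have [W [[WF [s [Hs Hsub]]] WV]] := fep _ sV1.
set A := [set h | F h /\ forall p, List.In p s -> dagger (ehalf p.2) [set p.1] (glim U, h)].
have HQ : forall p, List.In p s ->
    U [set h | dagger (ehalf p.2) [set p.1] (glim U, h)].
  move=> p sp; have [ep _] := Hs p sp.
  apply: filterS (glim_ptw p.1 UU UF prc (ehalf_sym ep)).
  by move=> h [].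
have UA : U A.
  by apply: filterS (filterI UF (filter_forall_In _ HQ)) => h [].
have AA : forall h1 h2, A h1 -> A h2 -> dagger (ehalf V) setT (h1, h2).
  move=> h1 h2 [F1 H1] [F2 H2]; have := WV (h1, h2); case; last by [].
  apply: Hsub; split => // p sp; have [ep _] := Hs p sp.
  have [_ symp] := ehalf_sym ep.
  apply: (dagger_comp _ (dagger_sym symp (H1 p sp)) (H2 p sp)).
  by move=> a b c; exact: ehalf_comp.
have UA0 := UA; apply: filterS UA0 => h Ah; split; first by case: Ah.
move=> x _.
have [h' [Ah' [Fh' dx]]] := filter_ex (filterI UA (glim_ptw x UU UF prc sV1)).
have dh : dagger (ehalf V) [set x] (h', h) by apply: dagger_mono (AA _ _ Ah' Ah).
have := dagger_comp (fun a b c => @ehalf_comp _ V a b c eV) dx dh.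
by move=> /(_ x erefl).
Qed.

Lemma glim_CXY {X : topologicalType} {Y : uniformType} (F : set (X -> set Y))
  (U : set_system (X -> set Y)) : UltraFilter U -> U F -> F `<=` CXY X Y ->
  pointwise_rel_compact F -> finite_extension_property F ->
  CXY X Y (glim U).
Proof.
move=> UU UF FC prc fep.
have PU : ProperFilter U := @ultra_proper _ _ UU.
have approx : forall V, sym_ent V -> exists f, F f /\ dagger V setT (glim U, f).
  move=> V sV; have [f [Ff df]] := filter_ex (glim_unif UU UF prc fep sV).
  by exists f.
split.
- move=> x.
  have [h [Fh H]] := filter_ex (filterI UF (glim_P2 x UU UF prc (@sym_entT Y))).
  have [ne _ _ _] := FC h Fh; have [z hz] := ne x.
  by have [y [gy _]] := H Fh z hz; exists y.
- by move=> x; exact: (glim_compact (x:=x) PU UF prc).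
- move=> x W oW gW.
  have [E [eE HE]] := compact_ent_nbhd (glim_compact (x:=x) PU UF prc) oW gW.
  have [eV symV] := third_sym eE.
  have [f [Ff dgf]] := approx _ (third_sym eE).
  have [_ _ uscf _] := FC f Ff.
  set W' := \bigcup_(a in f x) interior (xsection (third E) a).
  have oW' : open W' by apply: bigcup_open => a _; exact: open_interior.
  have sW' : f x `<=` W'.
    by move=> a fa; exists a => //; exact: nbhs_entourage.
  have [U0 [oU U0x HU]] := uscf x W' oW' sW'.
  exists U0; split => // y [u U0u gy].
  have [z [fz Vyz]] := (dgf u I).1 y gy.
  have [a fa /interior_subset /xsectionP Vaz] := HU z (ex_intro2 _ _ u U0u fz).
  have [b [gb Vba]] := (dgf x I).2 a fa.
  exact: (HE b y gb (third_comp eE Vba Vaz (symV _ _ Vyz))).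
- move=> x W oW [y [gy Wy]].
  have : nbhs y W by apply: open_nbhs_nbhs; split.
  move=> /nbhsP [E eE sE].
  have [eV symV] := third_sym eE.
  have [f [Ff dgf]] := approx _ (third_sym eE).
  have [_ _ _ lscf] := FC f Ff.
  have [z [fz Vyz]] := (dgf x I).1 y gy.
  have [|U0 [oU U0x HU]] := lscf x (interior (xsection (third E) z)) (@open_interior _ _).
    by exists z; split => //; exact: nbhs_entourage.
  exists U0; split => // u U0u.
  have [z' [fz' /interior_subset /xsectionP Vzz']] := HU u U0u.
  have [y' [gy' Vy'z']] := (dgf u I).2 z' fz'.
  exists y'; split => //; apply: sE; apply/xsectionP.
  exact: (third_comp eE Vyz Vzz' (symV _ _ Vy'z')).
Qed.


Lemma fep_ruc {X : topologicalType} {Y : uniformType} (F : set (X -> set Y)) :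
  F `<=` CXY X Y -> pointwise_rel_compact F -> finite_extension_property F ->
  rel_uc_compact F.
Proof.
move=> FC prc fep; split; first by move=> g [].
move=> I O oO cov; apply: contrapT => Nfin.
have ne : forall D : {fset I}, exists h, uc_closure F h /\
    ~ (\bigcup_(i in [set` D]) O i) h.
  move=> D; apply: contrapT => N; apply: Nfin; exists D => h Kh.
  by apply: contrapT => nh; apply: N; exists h; split.
pose T := fun (p : {fset I} * set (Y * Y)) => [set f | F f /\ exists h,
  [/\ uc_closure F h, ~ (\bigcup_(i in [set` p.1]) O i) h & dagger p.2 setT (h, f)]].
pose G := filter_from [set p : {fset I} * set (Y * Y) | sym_ent p.2] T.
have PG : ProperFilter G.
  apply: filter_from_proper.
    apply: filter_from_filter.
      by exists (fset0, setT); exact: sym_entT.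
    move=> [D1 V1] [D2 V2] s1 s2; exists ((D1 `|` D2)%fset, V1 `&` V2).
      exact: sym_entI.
    move=> f [Ff [h [Kh nh dh]]]; split; split => //; exists h; split => //=.
    - by apply: contra_not nh => -[i Di Oi]; exists i => //=; rewrite inE Di.
    - by apply: dagger_mono dh => // ? [].
    - by apply: contra_not nh => -[i Di Oi]; exists i => //=; rewrite inE Di orbT.
    - by apply: dagger_mono dh => // ? [].
  move=> [D V] sV; have [h [Kh nh]] := ne D.
  have [f [Ff dhf]] := uc_closure_approx Kh sV.
  by exists f; split => //; exists h.
have [U [UU GU]] := ultraFilterLemma PG.
have PU : ProperFilter U := @ultra_proper _ _ UU.
have UF : U F.
  by apply: GU; exists (fset0, setT); [exact: sym_entT | move=> f []].
have Cg := glim_CXY UU UF FC prc fep.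
have Kg : uc_closure F (glim U).
  split => // O0 oO0 O0g; have [V [sV HV]] := oO0.2 _ O0g.
  have [f [Ff dgf]] := filter_ex (glim_unif UU UF prc fep sV).
  by exists f; split => //; apply: HV => //; exact: FC.
have [i0 _ Oi0] := cov _ Kg.
have [V [sV HV]] := (oO i0).2 _ Oi0.
have eV : entourage V by case: sV.
have sV' := ehalf_sym eV; have [_ symV'] := sV'.
have UT : U (T ([fset i0]%fset, ehalf V)) by apply: GU; exists ([fset i0]%fset, ehalf V).
have [f [[Ff [h [Kh nh dhf]]] [_ dgf]]] := filter_ex (filterI UT (glim_unif UU UF prc fep sV')).
apply: nh; exists i0; first by rewrite /= inE.
apply: HV; first exact: Kh.1.
apply: (dagger_comp _ dgf (dagger_sym symV' dhf)).
by move=> a b c; exact: ehalf_comp.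
Qed.

Theorem corollary3p3 (X : topologicalType) (Y : uniformType)
  (F : set (X -> set Y)) :
  locally_compact [set: X] -> hausdorff_space Y ->
  F `<=` CXY X Y -> pointwise_rel_compact F -> mf_equicontinuous F ->
  (rel_uc_compact F <-> finite_extension_property F) /\
  (finite_extension_property F <-> compact_extension_property F).
Proof.
move=> _ _ FC prc equi; split; split.
- exact: ruc_fep.
- exact: fep_ruc.
- exact: fep_cep.
- exact: cep_fep.
Qed.
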